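(* There is a universal constant $C>0$ such that for every positive integer $T$, every $x \in \{0,1\}^T$ and every $p \in [0,1]^T$: (1) $\mathsf{CalDist}(x,p) \le \mathsf{LowerCalDist}(x,p) + C\sqrt{T}$; (2) $\mathsf{CalDist}(x,p) \le C\cdot \mathsf{LowerCalDist}(x,p) + C\, m$, where $m = |\{p_1, p_2, \ldots, p_T\}|$ is the number of distinct entries of $p$.
   Context: For $x \in \{0,1\}^T$, let $\mathcal{C}(x) = \{q \in [0,1]^T : \sum_{t=1}^T (x_t - q_t)\mathbf{1}[q_t = \alpha] = 0 \text{ for all } \alpha \in [0,1]\}$ (predictions perfectly calibrated for $x$). The calibration distance is $\mathsf{CalDist}(x,p) = \min_{q \in \mathcal{C}(x)} \|p-q\|_1$. Let $\underline{\mathcal{C}}(x)$ be the set of $T$-tuples $\mathcal{D} = (\mathcal{D}_1,\ldots,\mathcal{D}_T)$ of probability distributions, each with finite support contained in $[0,1]$, such that $\sum_{t=1}^T (x_t - \alpha)\mathcal{D}_t(\alpha) = 0$ for every $\alpha \in [0,1]$. For such $\mathcal{D}$ write $\|p - \mathcal{D}\|_1 = \sum_{t=1}^T \mathbb{E}_{q_t \sim \mathcal{D}_t}|p_t - q_t|$. The lower calibration distance is $\mathsf{LowerCalDist}(x,p) = \inf_{\mathcal{D} \in \underline{\mathcal{C}}(x)} \|p - \mathcal{D}\|_1$. *)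

(* Defs.v *)
From HB Require Import structures.
From mathcomp Require Import all_boot all_order all_algebra.
From mathcomp Require Import all_classical all_reals.
From mathcomp Require Import Rstruct.
From Stdlib Require Import Rdefinitions.
Set Implicit Arguments. Unset Strict Implicit. Unset Printing Implicit Defensive.
Import Order.TTheory GRing.Theory Num.Theory.
Local Open Scope ring_scope.
Local Open Scope classical_set_scope.

(* outcomes x in {0,1}^T are bool-valued; x_t is read as (x t)%:R *)

Definition perfectly_calibrated (T : nat) (x : 'I_T -> bool) (q : 'I_T -> R) : Prop :=
  (forall t, 0 <= q t <= 1) /\
  forall alpha : R, \sum_(t < T) ((x t)%:R - q t) * (q t == alpha)%:R = 0.

Definition l1dist (T : nat) (p q : 'I_T -> R) : R := \sum_(t < T) `|p t - q t|.

(* CalDist(x,p) = min_{q in C(x)} ||p - q||_1, written as the infimum (attained) *)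
Definition CalDist (T : nat) (x : 'I_T -> bool) (p : 'I_T -> R) : R :=
  inf [set c : R | exists q : 'I_T -> R, perfectly_calibrated x q /\ c = l1dist p q].

Definition finite_dist_on (d : R -> R) (s : seq R) : Prop :=
  [/\ uniq s, (forall a, a \in s -> 0 <= a <= 1),
      (forall a, 0 <= d a), (forall a, d a != 0 -> a \in s)
    & \sum_(a <- s) d a = 1].

Definition lower_calibrated (T : nat) (x : 'I_T -> bool)
    (D : 'I_T -> R -> R) (S : 'I_T -> seq R) : Prop :=
  (forall t, finite_dist_on (D t) (S t)) /\
  forall alpha : R, \sum_(t < T) ((x t)%:R - alpha) * D t alpha = 0.

Definition l1dist_dist (T : nat) (p : 'I_T -> R) (D : 'I_T -> R -> R)
    (S : 'I_T -> seq R) : R :=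
  \sum_(t < T) \sum_(a <- S t) D t a * `|p t - a|.

Definition LowerCalDist (T : nat) (x : 'I_T -> bool) (p : 'I_T -> R) : R :=
  inf [set c : R | exists (D : 'I_T -> R -> R) (S : 'I_T -> seq R),
          lower_calibrated x D S /\ c = l1dist_dist p D S].

Definition num_distinct (T : nat) (p : 'I_T -> R) : nat :=
  size (undup [seq p t | t <- enum 'I_T]).

(* Main.v *)
Require Import Defs.
From HB Require Import structures.
From mathcomp Require Import all_boot all_order all_algebra.
From mathcomp Require Import all_classical all_reals.
From mathcomp Require Import Rstruct.
From Stdlib Require Import Rdefinitions.
From mathcomp Require Import lra zify.
Import Order.TTheory GRing.Theory Num.Theory.
Local Open Scope ring_scope.
Set Implicit Arguments. Unset Strict Implicit. Unset Printing Implicit Defensive.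
Lemma tele0 (M i : nat) (v : nat -> R) : (i <= M)%nat ->
  \sum_(l < M) (v l.+1 - v l) * ((i <= l)%nat)%:R = v M - v i.
Proof.
move=> iM.
rewrite -(big_mkord xpredT (fun l => (v l.+1 - v l) * ((i <= l)%nat)%:R)).
rewrite (big_cat_nat (leq0n i) iM) /= big_nat_cond big1 ?add0r; last first.
  by move=> l /andP[/andP[_ li] _]; rewrite leqNgt li mulr0.
rewrite big_nat_cond (eq_bigr (fun l => v l.+1 - v l)).
  by rewrite -big_nat_cond telescope_sumr.
by move=> l /andP[/andP[il _] _]; rewrite il mulr1.
Qed.

Lemma tele_abs (M : nat) (v : nat -> R) :
  (forall l, (l < M)%nat -> v l <= v l.+1) ->
  forall i j, (i <= M)%nat -> (j <= M)%nat ->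
  `|v i - v j| = \sum_(l < M) (v l.+1 - v l) *
                    `|((i <= l)%nat)%:R - ((j <= l)%nat)%:R|.
Proof.
move=> Hv.
suff H : forall i j, (i <= j)%nat -> (j <= M)%nat ->
  `|v i - v j| = \sum_(l < M) (v l.+1 - v l) *
                    `|((i <= l)%nat)%:R - ((j <= l)%nat)%:R|.
  move=> i j iM jM; case: (leqP i j) => ij; first exact: H.
  rewrite distrC H ?(ltnW ij) //; apply: eq_bigr => l _.
  by rewrite distrC.
move=> i j ij jM.
have E : \sum_(l < M) (v l.+1 - v l) *
            `|((i <= l)%nat)%:R - ((j <= l)%nat)%:R| =
         \sum_(l < M) (v l.+1 - v l) * ((i <= l)%nat)%:R -
         \sum_(l < M) (v l.+1 - v l) * ((j <= l)%nat)%:R.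
  rewrite -sumrB; apply: eq_bigr => l _; rewrite -mulrBr; congr (_ * _).
  case: (leqP j l) => jl.
    by rewrite (leq_trans ij jl) /= subrr normr0.
  case: (leqP i l) => il; first by rewrite /= subr0 normr1.
  by rewrite /= subrr normr0.
rewrite E !tele0 ?(leq_trans ij jM) //.
have vij : v i <= v j.
  rewrite -subr_ge0.
  have -> : v j - v i = (v M - v i) - (v M - v j) by lra.
  rewrite -(tele0 v jM) -(tele0 v (leq_trans ij jM)) -sumrB.
  apply: sumr_ge0 => l _; rewrite -mulrBr; apply: mulr_ge0.
    by rewrite subr_ge0 Hv.
  case: (leqP j l) => jl; first by rewrite (leq_trans ij jl) subrr.
  by rewrite subr0 ler0n.
rewrite ler0_norm ?subr_le0 //; lra.
Qed.

Definition rkf (I : finType) (P : pred I) (key : I -> nat) (t : I) : nat :=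
  #|[set s | P s && (key s <= key t)%nat]|.

Lemma rkf_mono (I : finType) (P : pred I) (key : I -> nat) s t :
  (key s <= key t)%nat -> (rkf P key s <= rkf P key t)%nat.
Proof.
move=> st; rewrite /rkf; apply: subset_leq_card; apply/fintype.subsetP => u.
rewrite !inE => /andP[-> us] /=; exact: leq_trans us st.
Qed.

Lemma rkf_le (I : finType) (P : pred I) (key : I -> nat) t :
  (rkf P key t <= #|P|)%nat.
Proof.
rewrite /rkf; apply: subset_leq_card.
by apply/fintype.subsetP => u; rewrite !inE => /andP[].
Qed.

Lemma rank_count (I : finType) (P : pred I) (key : I -> nat) :
  injective key -> forall k, (k <= #|P|)%nat ->
  #|[set t | P t && (rkf P key t <= k)%nat]| = k.
Proof.
move=> inj k kP; set Q := [set t | P t && (rkf P key t <= k)%nat].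
apply/eqP; rewrite eqn_leq; apply/andP; split.
  case: (set_0Vmem Q) => [->|[t0 t0Q]]; first by rewrite cards0.
  case: (arg_maxnP key t0Q) => tm tmQ tmmax.
  apply: (@leq_trans (rkf P key tm)).
    apply: subset_leq_card; apply/fintype.subsetP => s sQ.
    have := sQ; rewrite !inE => /andP[-> _] /=; exact: tmmax.
  have {}tmQ : tm \in Q := tmQ.
  by move: tmQ; rewrite inE => /andP[].
set B := [set t | P t && ~~ (rkf P key t <= k)%nat].
case: (set_0Vmem B) => [B0|[u0 u0B]].
  suff -> : Q = [set t | P t] by rewrite cardsE.
  apply/setP => t; rewrite !inE; case Pt: (P t) => //=.
  apply/negPn/negP => H.
  have : t \in B by rewrite inE Pt H.
  by rewrite B0 inE.
case: (arg_minnP key u0B) => u uB umin.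
have {}uB : u \in B := uB.
have := uB; rewrite inE => /andP[Pu].
rewrite -ltnNge => ltku.
suff : (rkf P key u <= #|Q|.+1)%nat by move=> H; exact: leq_trans ltku H.
apply: (@leq_trans #|u |: Q|); last by rewrite cardsU1; case: (u \notin Q).
apply: subset_leq_card; apply/fintype.subsetP => s; rewrite !inE => /andP[Ps ksu].
case: (eqVneq s u) => [//|snu] /=.
rewrite Ps /=; apply/negPn/negP => H.
have sB : s \in B by rewrite inE Ps H.
have := umin s sB => kus.
have kE : key s = key u by apply/eqP; rewrite eqn_leq ksu kus.
by move: snu; rewrite (inj _ _ kE) eqxx.
Qed.

Lemma sum_ind (I : finType) (P Q : pred I) :
  \sum_(t | P t) (Q t)%:R = #|[set t | P t && Q t]|%:R :> R.
Proof.
rewrite (eq_bigr (fun t => if Q t then 1 else 0)); last by move=> t _; case: (Q t).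
rewrite -big_mkcondr (eq_bigl (mem [set t | P t && Q t])) ?sumr_const //.
by move=> t /=; rewrite inE.
Qed.

Lemma rank_absdiff (I : finType) (P : pred I) (key : I -> nat) :
  injective key -> forall a b, (a <= #|P|)%nat -> (b <= #|P|)%nat ->
  \sum_(t | P t) `|((rkf P key t <= a)%nat)%:R - ((rkf P key t <= b)%nat)%:R|
    = `|a%:R - b%:R| :> R.
Proof.
move=> inj.
suff H : forall a b, (a <= b)%nat -> (b <= #|P|)%nat ->
  \sum_(t | P t) `|((rkf P key t <= a)%nat)%:R - ((rkf P key t <= b)%nat)%:R|
    = `|a%:R - b%:R| :> R.
  move=> a b aP bP; case: (leqP a b) => ab; first exact: H.
  rewrite distrC -H ?(ltnW ab) //; apply: eq_bigr => t _; exact: distrC.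
move=> a b ab bP.
have cnt : forall c, (c <= #|P|)%nat ->
    \sum_(t | P t) ((rkf P key t <= c)%nat)%:R = c%:R :> R.
  by move=> c cP; rewrite sum_ind (rank_count inj cP).
rewrite ler0_norm ?subr_le0 ?ler_nat // opprB.
rewrite -(cnt a (leq_trans ab bP)) -(cnt b bP) -sumrB.
apply: eq_bigr => t _.
case: (leqP (rkf P key t) a) => ta.
  by rewrite (leq_trans ta ab) /= subrr normr0.
case: (leqP (rkf P key t) b) => tb; first by rewrite /= sub0r normrN normr1 subr0.
by rewrite /= subrr normr0.
Qed.


Section Core.
Variables (T : nat) (x : 'I_T -> bool) (D : 'I_T -> R -> R) (U : seq R).
Hypothesis HD0 : forall t a, 0 <= D t a.
Hypothesis HD1 : forall t, \sum_(a <- U) D t a = 1.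
Hypothesis Hcal : forall a, a \in U -> \sum_(t < T) ((x t)%:R - a) * D t a = 0.
Variables (M : nat) (v : nat -> R) (gi : 'I_T -> nat) (gj : R -> nat).
Hypothesis Hv : forall l, (l < M)%nat -> v l <= v l.+1.
Hypothesis Hv01 : forall l, (l <= M)%nat -> 0 <= v l <= 1.
Hypothesis Hgi : forall t, (gi t <= M)%nat.
Hypothesis Hgj : forall a, (gj a <= M)%nat.

Definition key (t : 'I_T) : nat := (gi t * T + t)%nat.

Lemma key_inj : injective key.
Proof.
move=> s t; rewrite /key => E.
have : ((gi s * T + s) %% T = (gi t * T + t) %% T)%nat by rewrite E.
by rewrite !modnMDl !modn_small // => /val_inj.
Qed.

Lemma key_lt s t : (gi s < gi t)%nat -> (key s < key t)%nat.
Proof. move=> H; rewrite /key; have := ltn_ord s; have := ltn_ord t; nia. Qed.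

Lemma key_le s t : (key s <= key t)%nat -> (gi s <= gi t)%nat.
Proof. by move=> H; rewrite leqNgt; apply/negP => /key_lt; rewrite ltnNge H. Qed.

Definition cls (b : bool) : pred 'I_T := fun t => x t == b.
Definition rk (t : 'I_T) : nat := rkf (cls (x t)) key t.
Definition nb (b : bool) : nat := #|cls b|.
Definition Acnt (b : bool) (l : nat) : nat := #|[set s | (x s == b) && (gi s <= l)%nat]|.
Definition w (b : bool) (l : nat) : R :=
  \sum_(t | x t == b) \sum_(a <- U) D t a * ((gj a <= l)%nat)%:R.
Definition Rr (b : bool) (l : nat) : nat := Num.trunc (w b l + 2^-1).
Definition sg (t : 'I_T) : nat :=
  (\sum_(0 <= j < M) ((Rr (x t) j < rk t)%nat : nat))%nat.

Lemma nbE b : @eq R (\sum_(t | x t == b) 1) (nb b)%:R.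
Proof.
rewrite (eq_bigr (fun t => (true)%:R)) // sum_ind /nb.
congr (_%:R); apply: eq_card => t; rewrite inE andbT //.
Qed.

Lemma w_ge0 b l : 0 <= w b l.
Proof.
apply: sumr_ge0 => t _; apply: sumr_ge0 => a _; apply: mulr_ge0 => //.
Qed.

Lemma w_le b l : w b l <= (nb b)%:R.
Proof.
rewrite -nbE; apply: ler_sum => t _; rewrite -[X in _ <= X](HD1 t); apply: ler_sum => a _.
rewrite -[X in _ <= X]mulr1; apply: ler_wpM2l => //.
by case: (gj a <= l)%nat.
Qed.

Lemma w_top b l : (M <= l)%nat -> w b l = (nb b)%:R.
Proof.
move=> Ml; rewrite -nbE; apply: eq_bigr => t _; rewrite -[RHS](HD1 t).
by apply: eq_bigr => a _; rewrite (leq_trans (Hgj a) Ml) mulr1.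
Qed.

Lemma w_mono b l l' : (l <= l')%nat -> w b l <= w b l'.
Proof.
move=> ll; apply: ler_sum => t _; apply: ler_sum => a _; apply: ler_wpM2l => //.
case: (leqP (gj a) l) => h /=; last by case: (gj a <= l')%nat.
by rewrite (leq_trans h ll).
Qed.

Lemma Rr_le b l : (Rr b l <= nb b)%nat.
Proof. by rewrite /Rr truncn_le_nat -[X in _ < X]natr1; have := w_le b l; lra. Qed.

Lemma Rr_top b l : (M <= l)%nat -> Rr b l = nb b.
Proof.
move=> Ml; rewrite /Rr w_top //; apply: truncn_def; rewrite -[(nb b).+1%:R]natr1; apply/andP; split; lra.
Qed.

Lemma Rr_mono b l l' : (l <= l')%nat -> (Rr b l <= Rr b l')%nat.
Proof. by move=> ll; apply: le_truncn; have := w_mono b ll; lra. Qed.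

Lemma Rr_close b l : `|(Rr b l)%:R - w b l| <= 2^-1.
Proof.
have := w_ge0 b l => h0.
have : 0 <= w b l + 2^-1 by lra.
move=> /truncn_itv; rewrite -/(Rr b l) -[(Rr b l).+1%:R]natr1 => /andP[h1 h2].
rewrite ler_norml; apply/andP; split; lra.
Qed.


Lemma sum_bool_le m n (f : nat -> bool) :
  (\sum_(m <= j < n) (f j : nat) <= n - m)%nat.
Proof.
apply: (@leq_trans (\sum_(m <= j < n) 1)%nat).
  by apply: leq_sum => j _; case: (f j).
by rewrite sum_nat_const_nat muln1.
Qed.

Lemma sg_leM t : (sg t <= M)%nat.
Proof. by have := sum_bool_le 0 M (fun j => (Rr (x t) j < rk t)%nat); rewrite subn0. Qed.

Lemma rk_le t : (rk t <= nb (x t))%nat.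
Proof. exact: rkf_le. Qed.

Lemma sg_le t l : (sg t <= l)%nat = (rk t <= Rr (x t) l)%nat.
Proof.
case: (leqP M l) => Ml.
  by rewrite (leq_trans (sg_leM t) Ml) Rr_top // rk_le.
case: (leqP (rk t) (Rr (x t) l)) => h.
  rewrite /sg (big_cat_nat (leq0n l) (ltnW Ml)) /=.
  rewrite [X in (_ + X)%nat]big_nat_cond [X in (_ + X)%nat]big1 ?addn0; last first.
    move=> j /andP[/andP[lj _] _]; rewrite ltnNge.
    by rewrite (leq_trans h (Rr_mono _ lj)).
  by have := sum_bool_le 0 l (fun j => (Rr (x t) j < rk t)%nat); rewrite subn0.
apply/negbTE; rewrite -ltnNge.
rewrite /sg (big_cat_nat (leq0n l.+1) Ml) /=.
apply: (leq_trans _ (leq_addr _ _)).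
rewrite (eq_big_nat _ _ (F2 := fun _ => 1%nat)); last first.
  move=> j /andP[_ jl].
  by rewrite (leq_ltn_trans (Rr_mono _ (jl : (j <= l)%nat)) h).
by rewrite sum_nat_const_nat muln1 subn0.
Qed.

Lemma gi_le t l : (gi t <= l)%nat = (rk t <= Acnt (x t) l)%nat.
Proof.
case: (leqP (gi t) l) => h.
  apply/esym; apply: subset_leq_card; apply/fintype.subsetP => s.
  rewrite !inE /cls => /andP[xs ks]; rewrite xs /=.
  exact: leq_trans (key_le ks) h.
apply/esym/negbTE; rewrite -ltnNge /rk /rkf.
apply: (@leq_trans #|t |: [set s | (x s == x t) && (gi s <= l)%nat]|).
  by rewrite cardsU1 inE eqxx /= -ltnNge h /Acnt add1n.
apply: subset_leq_card; apply/fintype.subsetP => s.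
rewrite !inE /cls => /orP[/eqP -> | /andP[xs sl]]; first by rewrite eqxx leqnn.
rewrite xs /=; apply: ltnW; apply: key_lt; exact: leq_ltn_trans sl h.
Qed.

Lemma cnt_sg b l :
  \sum_(t | x t == b) ((sg t <= l)%nat)%:R = (Rr b l)%:R :> R.
Proof.
rewrite (eq_bigr (fun t => ((rkf (cls b) key t <= Rr b l)%nat)%:R)); last first.
  by move=> t /eqP xt; rewrite sg_le /rk xt.
rewrite sum_ind (@rank_count _ (cls b) key key_inj) //.
exact: Rr_le.
Qed.

Lemma Acnt_le b l : (Acnt b l <= nb b)%nat.
Proof.
apply: subset_leq_card; apply/fintype.subsetP => s.
by rewrite !inE => /andP[].
Qed.

Lemma absdiff_cls b l :
  \sum_(t | x t == b) `|((gi t <= l)%nat)%:R - ((sg t <= l)%nat)%:R|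
    = `|(Acnt b l)%:R - (Rr b l)%:R| :> R.
Proof.
rewrite -(@rank_absdiff _ (cls b) key key_inj) ?Acnt_le ?Rr_le //.
by apply: eq_bigr => t /eqP xt; rewrite gi_le sg_le /rk xt.
Qed.

Lemma Acnt_sum b l :
  \sum_(t | x t == b) ((gi t <= l)%nat)%:R = (Acnt b l)%:R :> R.
Proof. by rewrite sum_ind. Qed.

Lemma split_cls (F : 'I_T -> R) :
  \sum_(t < T) F t = \sum_(t | x t == true) F t + \sum_(t | x t == false) F t.
Proof.
rewrite (bigID (fun t => x t)) /=; congr (_ + _); apply: eq_bigl => t.
  by case: (x t).
by case: (x t).
Qed.

Lemma Aw_bound b l :
  `|(Acnt b l)%:R - w b l| <=
  \sum_(t | x t == b) \sum_(a <- U) D t a *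
      `|((gi t <= l)%nat)%:R - ((gj a <= l)%nat)%:R|.
Proof.
have -> : (Acnt b l)%:R - w b l =
    \sum_(t | x t == b) \sum_(a <- U) D t a *
      (((gi t <= l)%nat)%:R - ((gj a <= l)%nat)%:R).
  rewrite -Acnt_sum /w -sumrB; apply: eq_bigr => t _.
  rewrite -[X in X - _]mulr1 -(HD1 t) mulr_sumr -sumrB.
  by apply: eq_bigr => a _; rewrite mulrBr mulrC.
apply: (le_trans (ler_norm_sum _ _ _)); apply: ler_sum => t _.
apply: (le_trans (ler_norm_sum _ _ _)); apply: ler_sum => a _.
by rewrite normrM ger0_norm.
Qed.

Lemma partA :
  \sum_(t < T) `|v (gi t) - v (sg t)| <=
  \sum_(t < T) \sum_(a <- U) D t a * `|v (gi t) - v (gj a)| + 1.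
Proof.
rewrite (eq_bigr _ (fun t _ => tele_abs Hv (Hgi t) (sg_leM t))) exchange_big /=.
have E2 : \sum_(t < T) \sum_(a <- U) D t a * `|v (gi t) - v (gj a)| =
  \sum_(l < M) (v l.+1 - v l) * \sum_(t < T) \sum_(a <- U) D t a *
      `|((gi t <= l)%nat)%:R - ((gj a <= l)%nat)%:R|.
  rewrite (eq_bigr (fun t => \sum_(l < M) (v l.+1 - v l) * \sum_(a <- U) D t a *
      `|((gi t <= l)%nat)%:R - ((gj a <= l)%nat)%:R|)); last first.
    move=> t _; rewrite (eq_bigr (fun a => \sum_(l < M) D t a * ((v l.+1 - v l) *
      `|((gi t <= l)%nat)%:R - ((gj a <= l)%nat)%:R|))); last first.
      by move=> a _; rewrite (tele_abs Hv (Hgi t) (Hgj a)) mulr_sumr.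
    rewrite exchange_big /=; apply: eq_bigr => l _; rewrite mulr_sumr.
    by apply: eq_bigr => a _; rewrite mulrCA.
  rewrite exchange_big /=; apply: eq_bigr => l _; by rewrite mulr_sumr.
rewrite E2.
have gsum : \sum_(l < M) (v l.+1 - v l) <= 1.
  have := tele0 v (leq0n M).
  rewrite (eq_bigr (fun l : 'I_M => v l.+1 - v l)); last by move=> l _; rewrite mulr1.
  move=> ->; have := Hv01 (leqnn M); have := Hv01 (leq0n M); lra.
apply: (@le_trans _ _ (\sum_(l < M) (v l.+1 - v l) * (\sum_(t < T) \sum_(a <- U) D t a *
      `|((gi t <= l)%nat)%:R - ((gj a <= l)%nat)%:R| + 1))); last first.
  rewrite (eq_bigr (fun l : 'I_M => (v l.+1 - v l) * (\sum_(t < T) \sum_(a <- U) D t a *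
      `|((gi t <= l)%nat)%:R - ((gj a <= l)%nat)%:R|) + (v l.+1 - v l))); last first.
    by move=> l _; rewrite mulrDr mulr1.
  by rewrite big_split /= lerD2l.
apply: ler_sum => l _; rewrite -mulr_sumr; apply: ler_wpM2l; first by rewrite subr_ge0 Hv.
rewrite split_cls !absdiff_cls.
rewrite [X in _ <= X + _]split_cls.
have h1 := Aw_bound true l; have h2 := Aw_bound false l.
have r1 := Rr_close true l; have r2 := Rr_close false l.
have t1 := ler_distD (w true l) (Acnt true l)%:R (Rr true l)%:R.
have t2 := ler_distD (w false l) (Acnt false l)%:R (Rr false l)%:R.
rewrite (distrC (w true l)) in t1; rewrite (distrC (w false l)) in t2.
lra.
Qed.

Definition nbin (b : bool) (j : nat) : R := \sum_(t | x t == b) ((sg t == j))%:R.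
Definition nT (j : nat) := nbin true j + nbin false j.
Definition beta (j : nat) := nbin true j / nT j.
Definition Wb (b : bool) (j : nat) : R :=
  \sum_(t | x t == b) \sum_(a <- U) D t a * ((gj a == j))%:R.

Lemma eq_ind (k j : nat) :
  @eq R ((k == j))%:R (((k <= j)%nat)%:R - ((k < j)%nat)%:R).
Proof. by case: (ltngtP k j) => h /=; rewrite ?subrr ?subr0. Qed.

Lemma lt_cum b j : @eq R (\sum_(t | x t == b) ((sg t < j)%nat)%:R)
  (if j is j'.+1 then (Rr b j')%:R else 0).
Proof.
case: j => [|j]; first by rewrite big1.
by rewrite -cnt_sg.
Qed.

Lemma wlt_cum b j :
  \sum_(t | x t == b) \sum_(a <- U) D t a * ((gj a < j)%nat)%:R =
  (if j is j'.+1 then w b j' else 0).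
Proof.
case: j => [|j]; last by [].
by rewrite big1 // => t _; rewrite big1 // => a _; rewrite mulr0.
Qed.

Lemma nW_close b j : `|nbin b j - Wb b j| <= 1.
Proof.
have E1 : nbin b j = (Rr b j)%:R - (if j is j'.+1 then (Rr b j')%:R else 0).
  rewrite -cnt_sg -lt_cum -sumrB; apply: eq_bigr => t _; exact: eq_ind.
have E2 : Wb b j = w b j - (if j is j'.+1 then w b j' else 0).
  rewrite -wlt_cum /w -sumrB; apply: eq_bigr => t _; rewrite -sumrB.
  by apply: eq_bigr => a _; rewrite -mulrBr eq_ind.
rewrite E1 E2; have r1 := Rr_close b j.
case: j r1 {E1 E2} => [|j] r1.
  by rewrite !subr0; apply: (le_trans r1); lra.
have r2 := Rr_close b j.
have -> : (Rr b j.+1)%:R - (Rr b j)%:R - (w b j.+1 - w b j) =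
   ((Rr b j.+1)%:R - w b j.+1) - ((Rr b j)%:R - w b j) by lra.
apply: (le_trans (ler_normB _ _)); lra.
Qed.

Lemma onehot (k : nat) (F : nat -> R) : (k <= M)%nat ->
  \sum_(j < M.+1) ((k == j))%:R * F j = F k.
Proof.
move=> kM; have kM' : (k < M.+1)%nat by [].
rewrite (bigD1 (Ordinal kM')) //= eqxx mul1r big1 ?addr0 // => j jk.
suff -> : (k == j) = false by rewrite mul0r.
apply/negbTE; apply: contra jk => /eqP kj; apply/eqP; apply: val_inj => /=.
by rewrite kj.
Qed.

Lemma sum_cls_sg b (F : nat -> R) :
  \sum_(t | x t == b) F (sg t) = \sum_(j < M.+1) nbin b j * F j.
Proof.
rewrite (eq_bigr (fun j : 'I_M.+1 => \sum_(t | x t == b) ((sg t == j))%:R * F j));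
  last by move=> j _; rewrite mulr_suml.
rewrite exchange_big /=; apply: eq_bigr => t _.
by rewrite onehot // sg_leM.
Qed.

Lemma sum_sg (F : nat -> R) :
  \sum_(t < T) F (sg t) = \sum_(j < M.+1) nT j * F j.
Proof.
rewrite split_cls !sum_cls_sg -big_split /=; apply: eq_bigr => j _.
by rewrite mulrDl.
Qed.

Lemma sum_x_sg (F : nat -> R) :
  \sum_(t < T) (x t)%:R * F (sg t) = \sum_(j < M.+1) nbin true j * F j.
Proof.
rewrite split_cls -sum_cls_sg [X in _ + X]big1 ?addr0.
  by apply: eq_bigr => t /eqP ->; rewrite mul1r.
by move=> t /eqP ->; rewrite mul0r.
Qed.

Lemma nbin_ge0 b j : 0 <= nbin b j.
Proof. by apply: sumr_ge0 => t _; rewrite ler0n. Qed.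

Lemma nT_beta j : nT j * beta j = nbin true j.
Proof.
have h1 := nbin_ge0 true j; have h0 := nbin_ge0 false j.
rewrite /beta; case: (eqVneq (nT j) 0) => [E|NZ].
  rewrite E mul0r; move: E; rewrite /nT => E; lra.
by rewrite mulrC divfK.
Qed.

Lemma beta01 j : 0 <= beta j <= 1.
Proof.
have h1 := nbin_ge0 true j; have h0 := nbin_ge0 false j.
rewrite /beta; case: (eqVneq (nT j) 0) => [E|NZ].
  by rewrite E invr0 mulr0 lexx ler01.
have pos : 0 < nT j by rewrite lt0r NZ /nT; lra.
apply/andP; split; first by apply: divr_ge0 => //; rewrite /nT; lra.
by rewrite ler_pdivrMr // mul1r /nT; lra.
Qed.

Lemma calib : perfectly_calibrated x (fun t => beta (sg t)).
Proof.
split; first by move=> t; exact: beta01.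
move=> al.
rewrite (eq_bigr (fun t => (x t)%:R * ((beta (sg t) == al))%:R -
    beta (sg t) * ((beta (sg t) == al))%:R)); last by move=> t _; rewrite mulrBl.
rewrite sumrB (sum_x_sg (fun j => ((beta j == al))%:R)) (sum_sg (fun j => beta j * ((beta j == al))%:R)).
rewrite -sumrB big1 // => j _; rewrite mulrA nT_beta; lra.
Qed.

Lemma WT_id j : Wb true j + Wb false j =
  \sum_(t < T) \sum_(a <- U) D t a * ((gj a == j))%:R.
Proof. by rewrite [RHS]split_cls. Qed.

Lemma W1_id j : Wb true j =
  \sum_(t < T) (x t)%:R * \sum_(a <- U) D t a * ((gj a == j))%:R.
Proof.
rewrite split_cls [X in _ = _ + X]big1 ?addr0.
  by apply: eq_bigr => t /eqP ->; rewrite mul1r.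
by move=> t /eqP ->; rewrite mul0r.
Qed.

Lemma bin_key j : (Wb true j + Wb false j) * v j - Wb true j =
  \sum_(t < T) \sum_(a <- U) D t a * ((gj a == j))%:R * (v j - a).
Proof.
rewrite WT_id W1_id mulr_suml -sumrB.
have -> : \sum_(t < T) ((\sum_(a <- U) D t a * ((gj a == j))%:R) * v j -
     (x t)%:R * \sum_(a <- U) D t a * ((gj a == j))%:R) =
  \sum_(t < T) \sum_(a <- U) D t a * ((gj a == j))%:R * (v j - (x t)%:R).
  apply: eq_bigr => t _; rewrite mulr_suml mulr_sumr -sumrB.
  by apply: eq_bigr => a _; lra.
rewrite exchange_big [RHS]exchange_big /= big_seq [RHS]big_seq.
apply: eq_bigr => a aU; apply/eqP; rewrite -subr_eq0 -sumrB.
rewrite (eq_bigr (fun t => - ((gj a == j))%:R * (((x t)%:R - a) * D t a)));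
  last by move=> t _; lra.
by rewrite -mulr_sumr Hcal // mulr0.
Qed.

Lemma bin_bound j : (j <= M)%nat -> `|nT j * v j - nbin true j| <=
  3 + \sum_(t < T) \sum_(a <- U) D t a * ((gj a == j))%:R * `|v j - a|.
Proof.
move=> jM.
have K := bin_key j.
have c1 := nW_close true j; have c0 := nW_close false j.
have /andP[v0 v1] := Hv01 jM.
have S : `|(Wb true j + Wb false j) * v j - Wb true j| <=
    \sum_(t < T) \sum_(a <- U) D t a * ((gj a == j))%:R * `|v j - a|.
  rewrite K; apply: (le_trans (ler_norm_sum _ _ _)); apply: ler_sum => t _.
  apply: (le_trans (ler_norm_sum _ _ _)); apply: ler_sum => a _.
  by rewrite !normrM (ger0_norm (HD0 t a)) normr_nat.
have e : nT j * v j - nbin true j =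
   (nT j - (Wb true j + Wb false j)) * v j +
   ((Wb true j + Wb false j) * v j - Wb true j) + (Wb true j - nbin true j).
  rewrite /nT; lra.
have B1 : `|(nT j - (Wb true j + Wb false j)) * v j| <= 2.
  rewrite normrM (ger0_norm v0).
  have -> : nT j - (Wb true j + Wb false j) =
     (nbin true j - Wb true j) + (nbin false j - Wb false j) by rewrite /nT; lra.
  have := ler_normD (nbin true j - Wb true j) (nbin false j - Wb false j).
  move=> h; have h2 : 0 <= `|nbin true j - Wb true j + (nbin false j - Wb false j)|.
    exact: normr_ge0.
  nra.
rewrite e; apply: (le_trans (ler_normD _ _)).
have := ler_normD ((nT j - (Wb true j + Wb false j)) * v j)
   ((Wb true j + Wb false j) * v j - Wb true j).
rewrite distrC in c1.
lra.
Qed.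

Lemma partB : \sum_(t < T) `|v (sg t) - beta (sg t)| <=
  (3 * M.+1)%:R + \sum_(t < T) \sum_(a <- U) D t a * `|v (gj a) - a|.
Proof.
rewrite (sum_sg (fun j => `|v j - beta j|)).
have E : forall j, nT j * `|v j - beta j| = `|nT j * v j - nbin true j|.
  move=> j; have h0 : 0 <= nT j.
    by have := nbin_ge0 true j; have := nbin_ge0 false j; rewrite /nT; lra.
  by rewrite -nT_beta -mulrBr normrM (ger0_norm h0).
rewrite (eq_bigr (fun j : 'I_M.+1 => `|nT j * v j - nbin true j|)); last by move=> j _; exact: E.
apply: (le_trans (ler_sum _ (fun (j : 'I_M.+1) _ => bin_bound (ltnSE (ltn_ord j))))).
rewrite big_split /= sumr_const card_ord; apply: lerD; first by rewrite natrM mulr_natr.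
rewrite exchange_big /= le_eqVlt; apply/orP; left; apply/eqP; apply: eq_bigr => t _.
rewrite exchange_big /=; apply: eq_bigr => a _.
rewrite -(@onehot (gj a) (fun j => D t a * `|v j - a|)) //; apply: eq_bigr => j _.
by rewrite mulrCA mulrA.
Qed.

Lemma core : exists q : 'I_T -> R, perfectly_calibrated x q /\
  \sum_(t < T) `|v (gi t) - q t| <=
  \sum_(t < T) \sum_(a <- U) D t a * (`|v (gi t) - v (gj a)| + `|v (gj a) - a|)
   + (3 * M + 4)%:R.
Proof.
exists (fun t => beta (sg t)); split; first exact: calib.
have hA := partA; have hB := partB.
have tri : \sum_(t < T) `|v (gi t) - beta (sg t)| <=
   \sum_(t < T) `|v (gi t) - v (sg t)| + \sum_(t < T) `|v (sg t) - beta (sg t)|.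
  rewrite -big_split /=; apply: ler_sum => t _; exact: ler_distD.
have split2 : \sum_(t < T) \sum_(a <- U) D t a * (`|v (gi t) - v (gj a)| + `|v (gj a) - a|)
  = \sum_(t < T) \sum_(a <- U) D t a * `|v (gi t) - v (gj a)| +
    \sum_(t < T) \sum_(a <- U) D t a * `|v (gj a) - a|.
  rewrite -big_split /=; apply: eq_bigr => t _; rewrite -big_split /=.
  by apply: eq_bigr => a _; rewrite mulrDr.
rewrite split2.
have -> : @eq R (3 * M + 4)%:R (1 + (3 * M.+1)%:R).
  by rewrite (_ : (3 * M + 4 = 1 + 3 * M.+1)%nat) ?natrD ?mulr1n //; lia.
lra.
Qed.

End Core.


Lemma sum_sub (s U : seq R) (f : R -> R) : uniq s -> uniq U ->
  {subset s <= U} -> (forall a, f a != 0 -> a \in s) ->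
  \sum_(a <- s) f a = \sum_(a <- U) f a.
Proof.
move=> us uU sU fs.
rewrite [RHS](bigID (fun a => a \in s)) /= [X in _ = _ + X]big1 ?addr0; last first.
  move=> a /negP ns; apply/eqP; apply/negP => /negP nz; apply: ns; exact: fs.
rewrite -[RHS]big_filter; apply: (perm_big _ (r1 := s)); apply: uniq_perm => //.
  exact: filter_uniq.
move=> a; rewrite mem_filter; case as_: (a \in s) => //=.
by rewrite sU.
Qed.

Definition Ulist (T : nat) (S : 'I_T -> seq R) : seq R :=
  undup (flatten [seq S t | t <- enum 'I_T]).

Lemma Ulist_mem T (S : 'I_T -> seq R) t a : a \in S t -> a \in Ulist S.
Proof.
move=> aS; rewrite mem_undup; apply/flatten_mapP; exists t => //.
by rewrite mem_enum.
Qed.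

Lemma Ulist_memE T (S : 'I_T -> seq R) a : a \in Ulist S -> exists t, a \in S t.
Proof. by rewrite mem_undup => /flatten_mapP[t _ h]; exists t. Qed.

Lemma cal_le T (x : 'I_T -> bool) (p q : 'I_T -> R) :
  perfectly_calibrated x q -> CalDist x p <= l1dist p q.
Proof.
move=> qc; rewrite /CalDist; apply: ge_inf; last by exists q.
exists 0 => c [q' [_ ->]]; apply: sumr_ge0 => t _; exact: normr_ge0.
Qed.

Lemma cost_U T (x : 'I_T -> bool) (p : 'I_T -> R) D S :
  lower_calibrated x D S ->
  l1dist_dist p D S = \sum_(t < T) \sum_(a <- Ulist S) D t a * `|p t - a|.
Proof.
move=> [Hfd _]; apply: eq_bigr => t _.
have [us _ D0 DS _] := Hfd t.
apply: sum_sub => //; first exact: undup_uniq.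
  by move=> a; apply: Ulist_mem.
move=> a nz; apply: DS; apply: contra nz => /eqP ->; by rewrite mul0r.
Qed.

Lemma reduce T (x : 'I_T -> bool) (p : 'I_T -> R) D S :
  lower_calibrated x D S ->
  forall M (v : nat -> R) (gi : 'I_T -> nat) (gj : R -> nat),
  (forall l, (l < M)%nat -> v l <= v l.+1) ->
  (forall l, (l <= M)%nat -> 0 <= v l <= 1) ->
  (forall t, (gi t <= M)%nat) -> (forall a, (gj a <= M)%nat) ->
  CalDist x p <= \sum_(t < T) `|p t - v (gi t)| +
    \sum_(t < T) \sum_(a <- Ulist S) D t a * (`|v (gi t) - v (gj a)| + `|v (gj a) - a|)
    + (3 * M + 4)%:R.
Proof.
move=> [Hfd Hc] M v gi gj Hv Hv01 Hgi Hgj.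
have HD0 : forall t a, 0 <= D t a by move=> t a; have [_ _ h _ _] := Hfd t.
have HD1 : forall t, \sum_(a <- Ulist S) D t a = 1.
  move=> t; have [us _ D0 DS s1] := Hfd t; rewrite -s1; apply/esym.
  apply: sum_sub => //; first exact: undup_uniq.
  by move=> a; apply: Ulist_mem.
have Hcal : forall a, a \in Ulist S -> \sum_(t < T) ((x t)%:R - a) * D t a = 0.
  by move=> a _; apply: Hc.
have [q [qc qb]] := core HD0 HD1 Hcal Hv Hv01 Hgi Hgj.
apply: (le_trans (cal_le p qc)); rewrite /l1dist.
apply: (@le_trans _ _ (\sum_(t < T) `|p t - v (gi t)| + \sum_(t < T) `|v (gi t) - q t|)).
  rewrite -big_split /=; apply: ler_sum => t _; exact: ler_distD.
by rewrite -addrA lerD2l.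
Qed.

Lemma lower_ne T (x : 'I_T -> bool) (p : 'I_T -> R) : (0 < T)%nat ->
  ([set c : R | exists (D : 'I_T -> R -> R) (S : 'I_T -> seq R),
          lower_calibrated x D S /\ c = l1dist_dist p D S] !=set0)%classic.
Proof.
move=> T0.
pose mu := (\sum_(t < T) (x t)%:R) / (T%:R : R).
have Tpos : 0 < (T%:R : R) by rewrite ltr0n.
have mu0 : 0 <= mu by apply: divr_ge0; [apply: sumr_ge0 => t _; exact: ler0n | exact: ltW].
have mu1 : mu <= 1.
  rewrite /mu ler_pdivrMr // mul1r.
  apply: (@le_trans _ _ (\sum_(t < T) 1)); first by apply: ler_sum => t _; case: (x t).
  by rewrite sumr_const card_ord.
exists (l1dist_dist p (fun _ a => ((a == mu))%:R) (fun _ => [:: mu])).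
exists (fun _ a => ((a == mu))%:R), (fun _ => [:: mu]); split => //.
split.
  move=> t; split => //.
  - by move=> a; rewrite inE => /eqP ->; rewrite mu0 mu1.
  - by move=> a; rewrite inE; case: (a == mu) => //=; rewrite mulr0n eqxx.
  - by rewrite big_cons big_nil eqxx addr0.
move=> al; case: (eqVneq al mu) => [->|ne].
  rewrite (eq_bigr (fun t => (x t)%:R - mu)); last by move=> t _; rewrite mulr1.
  rewrite sumrB sumr_const card_ord /mu -[_ *+ T]mulr_natr divfK ?subrr //.
  by rewrite gt_eqF.
by rewrite big1 // => t _; rewrite mulr0.
Qed.

Lemma lower_lift T (x : 'I_T -> bool) (p : 'I_T -> R) (a c : R) : (0 < T)%nat ->
  0 < a ->
  (forall D S, lower_calibrated x D S -> CalDist x p <= a * l1dist_dist p D S + c) ->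
  CalDist x p <= a * LowerCalDist x p + c.
Proof.
move=> T0 apos H.
have : (CalDist x p - c) / a <= LowerCalDist x p.
  apply: lb_le_inf; first exact: lower_ne.
  move=> y [D [S [HDS ->]]]; rewrite ler_pdivrMr //; have := H D S HDS; lra.
rewrite ler_pdivrMr // => h; lra.
Qed.

Lemma lower_ge0 T (x : 'I_T -> bool) (p : 'I_T -> R) : (0 < T)%nat ->
  0 <= LowerCalDist x p.
Proof.
move=> T0; apply: lb_le_inf; first exact: lower_ne.
move=> y [D [S [[Hfd _] ->]]]; apply: sumr_ge0 => t _; apply: sumr_ge0 => a _.
have [_ _ h _ _] := Hfd t; apply: mulr_ge0 => //; exact: normr_ge0.
Qed.


Definition gjf (M : nat) (s : seq R) (a : R) : nat :=
  nat_of_ord (Order.arg_min (ord0 : 'I_M.+1) xpredT (fun j : 'I_M.+1 => `|nth 0 s j - a|)).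

Lemma gjf_min M s a (j : 'I_M.+1) : `|nth 0 s (gjf M s a) - a| <= `|nth 0 s j - a|.
Proof.
rewrite /gjf; case: (@arg_minP _ _ _ (ord0 : 'I_M.+1) xpredT (fun j : 'I_M.+1 => `|nth 0 s j - a|)) => //.
move=> i _ H; exact: H.
Qed.

Lemma gjf_le M s a : (gjf M s a <= M)%nat.
Proof. by rewrite /gjf -ltnS ltn_ord. Qed.

Lemma part2 T (x : 'I_T -> bool) (p : 'I_T -> R) : (0 < T)%nat ->
  (forall t, 0 <= p t <= 1) -> forall D S, lower_calibrated x D S ->
  CalDist x p <= 3 * l1dist_dist p D S + 4 * (num_distinct p)%:R.
Proof.
move=> T0 p01 D S HDS.
pose s0 := undup [seq p t | t <- enum 'I_T].
pose s := sort <=%R s0.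
have sz : size s = num_distinct p by rewrite size_sort.
have pin : forall t, p t \in s.
  by move=> t; rewrite mem_sort mem_undup; apply: map_f; rewrite mem_enum.
have spos : (0 < size s)%nat.
  rewrite lt0n size_eq0; apply/eqP => E; move: (pin (Ordinal T0)); by rewrite E.
pose M := (size s).-1.
have sM : size s = M.+1 by rewrite prednK.
have srt : sorted <=%R s by apply: sort_sorted; exact: le_total.
pose v := fun l => nth 0 s l.
pose gi := fun t => index (p t) s.
pose gj := fun a => gjf M s a.
have Hv : forall l, (l < M)%nat -> v l <= v l.+1.
  move=> l lM; apply: (le_sorted_leq_nth 0 srt); rewrite ?inE ?sM //.
  exact: ltnW.
have Hv01 : forall l, (l <= M)%nat -> 0 <= v l <= 1.
  move=> l lM; rewrite /v; have : nth 0 s l \in s by apply: mem_nth; rewrite sM.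
  rewrite mem_sort mem_undup => /mapP[t _ ->]; exact: p01.
have Hgi : forall t, (gi t <= M)%nat.
  by move=> t; rewrite -ltnS -sM index_mem.
have Hgj : forall a, (gj a <= M)%nat by move=> a; exact: gjf_le.
have H := reduce p HDS Hv Hv01 Hgi Hgj.
have vgi : forall t, v (gi t) = p t by move=> t; rewrite /v /gi nth_index.
rewrite (eq_bigr (fun _ => 0)) in H; last by move=> t _; rewrite vgi subrr normr0.
rewrite big1_eq add0r in H.
apply: (le_trans H).
have -> : 3 * l1dist_dist p D S =
   \sum_(t < T) \sum_(a <- Ulist S) D t a * (3 * `|p t - a|).
  rewrite (cost_U p HDS) mulr_sumr; apply: eq_bigr => t _.
  rewrite mulr_sumr; apply: eq_bigr => a _; by rewrite mulrCA.
have HD0 : forall t a, 0 <= D t a by move=> t a; have [Hfd _] := HDS; have [_ _ h _ _] := Hfd t.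
apply: lerD.
  apply: ler_sum => t _; apply: ler_sum => a _; apply: ler_wpM2l => //.
  rewrite vgi.
  have m1 : `|v (gj a) - a| <= `|p t - a|.
    have gt : (gi t < M.+1)%nat by rewrite ltnS.
    have := @gjf_min M s a (Ordinal gt); rewrite /= -/(v (gi t)) vgi //.
  have := ler_distD a (p t) (v (gj a)); rewrite (distrC a) => m2.
  lra.
rewrite -sz sM.
rewrite natrD natrM -[M.+1%:R]natr1; have h : 0 <= (M%:R : R) by exact: ler0n. lra.
Qed.

Lemma part1 T (x : 'I_T -> bool) (p : 'I_T -> R) : (0 < T)%nat ->
  (forall t, 0 <= p t <= 1) -> forall D S, lower_calibrated x D S ->
  CalDist x p <= l1dist_dist p D S + 14 * Num.sqrt (T%:R).
Proof.
move=> T0 p01 D S HDS.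
pose r := Num.sqrt (T%:R : R).
have r0 : 0 <= r by exact: sqrtr_ge0.
have r1 : 1 <= r.
  have := @ler_wsqrtr R 1 (T%:R); rewrite sqrtr1 => h; apply: h.
  by rewrite ler1n.
have rr : r * r = T%:R by rewrite -expr2 sqr_sqrtr // ler0n.
pose K := (Num.trunc r).+1.
pose k := (K%:R : R).
have [tr1 tr2] : ((Num.trunc r)%:R <= r) /\ (r < k).
  by have /andP[h1 h2] := truncn_itv r0; split.
have kr : k <= r + 1 by rewrite /k /K -natr1; lra.
have kpos : 0 < k by lra.
have ki0 : 0 <= k^-1 by rewrite invr_ge0 ltW.
pose v := fun l : nat => l%:R / k.
pose gq := fun y : R => minn (Num.trunc (y * k)) K.
have approx : forall y, 0 <= y <= 1 -> `|y - v (gq y)| <= k^-1.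
  move=> y /andP[y0 y1].
  have yk0 : 0 <= y * k by apply: mulr_ge0 => //; exact: ltW.
  have /andP[t1 t2] := truncn_itv yk0.
  have tK : (Num.trunc (y * k) <= K)%nat.
    rewrite truncn_le_nat -[K.+1%:R]natr1 -/k.
    have : y * k <= 1 * k by apply: ler_wpM2r => //; exact: ltW.
    lra.
  rewrite /gq (minn_idPl tK) /v.
  have e : y - (Num.trunc (y * k))%:R / k = (y * k - (Num.trunc (y * k))%:R) / k.
    by rewrite mulrBl mulfK ?gt_eqF.
  rewrite e normrM (ger0_norm ki0) -[X in _ <= X]mul1r; apply: ler_wpM2r => //.
  rewrite -natr1 in t2.
  rewrite ler_norml; apply/andP; split; lra.
have Hv : forall l, (l < K)%nat -> v l <= v l.+1.
  by move=> l _; apply: ler_wpM2r => //; rewrite ler_nat.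
have Hv01 : forall l, (l <= K)%nat -> 0 <= v l <= 1.
  move=> l lK; apply/andP; split; first by apply: divr_ge0; [exact: ler0n | exact: ltW].
  by rewrite ler_pdivrMr // mul1r ler_nat.
have Hgi : forall t, ((fun t => gq (p t)) t <= K)%nat by move=> t; exact: geq_minr.
have Hgj : forall a, (gq a <= K)%nat by move=> a; exact: geq_minr.
have H := @reduce T x p D S HDS K v (fun t => gq (p t)) gq Hv Hv01 Hgi Hgj.
apply: (le_trans H) => {H}.
have HD0 : forall t a, 0 <= D t a by move=> t a; have [Hfd _] := HDS; have [_ _ h _ _] := Hfd t.
have HD1 : forall t, \sum_(a <- Ulist S) D t a = 1.
  move=> t; have [Hfd _] := HDS; have [us _ D0 DS s1] := Hfd t; rewrite -s1; apply/esym.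
  apply: sum_sub => //; first exact: undup_uniq.
  by move=> a; apply: Ulist_mem.
have U01 : forall a, a \in Ulist S -> 0 <= a <= 1.
  move=> a /Ulist_memE[t aS]; have [Hfd _] := HDS; have [_ h _ _ _] := Hfd t; exact: h.
have B1 : \sum_(t < T) `|p t - v (gq (p t))| <= T%:R * k^-1.
  apply: (@le_trans _ _ (\sum_(t < T) k^-1)).
    by apply: ler_sum => t _; exact: approx.
  by rewrite sumr_const card_ord mulr_natl.
have B2 : \sum_(t < T) \sum_(a <- Ulist S) D t a *
     (`|v (gq (p t)) - v (gq a)| + `|v (gq a) - a|) <=
   l1dist_dist p D S + T%:R * (3 * k^-1).
  apply: (@le_trans _ _ (\sum_(t < T) (\sum_(a <- Ulist S) D t a * `|p t - a| + 3 * k^-1))); last first.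
    by rewrite big_split /= (cost_U p HDS) sumr_const card_ord [X in _ <= _ + X]mulr_natl.
  apply: ler_sum => t _.
  have E : \sum_(a <- Ulist S) D t a * (`|p t - a| + 3 / k) =
     \sum_(a <- Ulist S) D t a * `|p t - a| + 3 / k.
    by rewrite -[in RHS](mul1r (3 / k)) -(HD1 t) mulr_suml -big_split /=; apply: eq_bigr => a _; rewrite mulrDr.
  rewrite -E big_seq [X in _ <= X]big_seq; apply: ler_sum => a aU.
  apply: ler_wpM2l => //.
  have ha := approx a (U01 a aU); have hp := approx (p t) (p01 t).
  have t1 := ler_distD (p t) (v (gq (p t))) (v (gq a)).
  have t2 := ler_distD a (p t) (v (gq a)).
  have e1 := distrC (v (gq (p t))) (p t).
  have e2 := distrC (v (gq a)) a.
  lra.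
have Tk : T%:R * k^-1 <= r.
  rewrite ler_pdivrMr // -rr; apply: ler_wpM2l => //; exact: ltW.
have Kk : @eq R (3 * K + 4)%:R (3 * k + 4) by rewrite natrD natrM.
rewrite Kk -/r; lra.
Qed.

Theorem theorem2 :
  exists C : R, 0 < C /\
    forall (T : nat) (x : 'I_T -> bool) (p : 'I_T -> R),
      (0 < T)%nat -> (forall t, 0 <= p t <= 1) ->
      CalDist x p <= LowerCalDist x p + C * Num.sqrt (T%:R) /\
      CalDist x p <= C * LowerCalDist x p + C * (num_distinct p)%:R.
Proof.
exists 20; split; first by [].
move=> T x p T0 p01.
have L0 := lower_ge0 x p T0.
have s0 : 0 <= Num.sqrt (T%:R : R) by exact: sqrtr_ge0.
have m0 : 0 <= ((num_distinct p)%:R : R) by exact: ler0n.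
split.
  have H : forall D S, lower_calibrated x D S ->
      CalDist x p <= 1 * l1dist_dist p D S + 14 * Num.sqrt T%:R.
    by move=> D S HDS; rewrite mul1r; exact: part1.
  have := @lower_lift _ _ _ _ _ T0 ltr01 H; lra.
have H : forall D S, lower_calibrated x D S ->
    CalDist x p <= 3 * l1dist_dist p D S + 4 * (num_distinct p)%:R.
  by move=> D S HDS; exact: part2.
have := @lower_lift _ _ _ _ _ T0 (@ltr0Sn R 2) H; lra.
Qed.
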